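(* Let $X$ be a finite set with $|X|\ge 3$, let $\mathcal T$ be a triplet cover for a tree $T\in B(X)$, and let $x\in X$. If $\mu(x)=2$, then $\deg_{\mathcal T}(x)=1$.
   Context: A binary phylogenetic $X$-tree is an unrooted tree whose leaf set is $X$ and all of whose non-leaf vertices are unlabelled of degree three; $B(X)$ is the set of such trees; $\mathring V$ is the set of interior vertices. Pairs in $\binom{X}{2}$ are written $ab$, triples $abc$. Given $\mathcal T\subseteq\binom{X}{2}$, a triple $abc$ supports $v\in\mathring V$ if $a,b,c$ lie one in each of the three components of $T$ minus $v$ and $ab,ac,bc\in\mathcal T$; $S_v(\mathcal T)$ is the set of such triples; $\mathcal T$ is a triplet cover for $T$ if $S_v(\mathcal T)\neq\emptyset$ for all $v\in\mathring V$. The support graph $G(\mathcal T)$ is the bipartite graph on $X\amalg\mathring V$ with $\{x,v\}$ an edge iff $x\in A$ for all $A\in S_v(\mathcal T)$; $\deg_{\mathcal T}(x)$ is the degree of $x$ in $G(\mathcal T)$. The multiplicity $\mu(x)=\mu_{\mathcal T}(x)$ is the number of elements of $\mathcal T$ containing $x$. *)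

(* Defs.v *)
From mathcomp Require Import all_boot.
Set Implicit Arguments. Unset Strict Implicit. Unset Printing Implicit Defensive.

Section PhyloDefs.
Variables (X V : finType).

Definition vdeg (e : rel V) (v : V) : nat := #|[set w | e v w]|.

(* An unrooted binary phylogenetic X-tree: a finite tree on V (simple graph,
   connected, acyclic) whose leaves (degree-1 vertices) are labelled
   bijectively by X via [leaf], all other vertices being unlabelled of
   degree three. *)
Definition is_binary_phylo_tree (e : rel V) (leaf : X -> V) : Prop :=
  [/\ symmetric e, irreflexive e,
      (forall u w : V, connect e u w) &
      (forall p : seq V, uniq p -> 2 < size p -> ~~ cycle e p)] /\
  [/\ injective leaf,
      (forall x : X, vdeg e (leaf x) = 1) &
      (forall v : V, v \notin codom leaf -> vdeg e v = 3)].

Definition interior (leaf : X -> V) (v : V) : bool := v \notin codom leaf.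

Definition rel_minus (e : rel V) (v : V) : rel V :=
  [rel u w | [&& e u w, u != v & w != v]].

Definition separated (e : rel V) (leaf : X -> V) (v : V) (a b : X) : bool :=
  ~~ connect (rel_minus e v) (leaf a) (leaf b).

Definition pair_set (T : {set {set X}}) : Prop :=
  forall p, p \in T -> #|p| = 2.

Definition supports (e : rel V) (leaf : X -> V) (T : {set {set X}})
    (v : V) (a b c : X) : bool :=
  [&& separated e leaf v a b, separated e leaf v a c, separated e leaf v b c,
      [set a; b] \in T, [set a; c] \in T & [set b; c] \in T].

Definition Sv (e : rel V) (leaf : X -> V) (T : {set {set X}}) (v : V)
    : {set {set X}} :=
  [set A : {set X} | [exists a, exists b, exists c,
      (A == [set a; b; c]) && supports e leaf T v a b c]].

Definition triplet_cover (e : rel V) (leaf : X -> V) (T : {set {set X}}) : Prop :=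
  forall v, interior leaf v -> Sv e leaf T v != set0.

Definition support_edge (e : rel V) (leaf : X -> V) (T : {set {set X}})
    (x : X) (v : V) : bool :=
  interior leaf v && [forall A in Sv e leaf T v, x \in A].

Definition support_deg (e : rel V) (leaf : X -> V) (T : {set {set X}}) (x : X)
    : nat := #|[set v | support_edge e leaf T x v]|.

End PhyloDefs.

Definition multiplicity (X : finType) (T : {set {set X}}) (x : X) : nat :=
  #|[set p in T | x \in p]|.

(* Main.v *)
Require Import Defs.
From mathcomp Require Import all_boot.
From mathcomp Require Import zify.
Set Implicit Arguments. Unset Strict Implicit. Unset Printing Implicit Defensive.

Section Aux.
Variables (X V : finType) (e : rel V) (leaf : X -> V).
Hypothesis esym : symmetric e.

Lemma rm_sym v : symmetric (rel_minus e v).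
Proof. by move=> u w; rewrite /rel_minus /= esym; congr (_ && _); apply: andbC. Qed.

Lemma csym v : connect_sym (rel_minus e v).
Proof. exact: sym_connect_sym (rm_sym v). Qed.

Lemma last_step u v : u != v -> connect e u v ->
  exists2 w, connect (rel_minus e v) u w & e w v.
Proof.
move=> uv /connectP [p pth lst].
elim: p u uv pth lst => [|y p IH] u uv /=.
  by move=> _ E; rewrite E eqxx in uv.
move=> /andP [euy pth] lst.
case: (eqVneq y v) => [yv|yv].
  by exists u; [exact: connect0 | rewrite -yv].
have [w c ew] := IH y yv pth lst.
exists w => //; apply: connect_trans c; apply: connect1.
by rewrite /rel_minus /= euy uv yv.
Qed.

Lemma avoid v1 v2 s t : connect (rel_minus e v1) s t ->
  ~~ connect (rel_minus e v1) s v2 -> connect (rel_minus e v2) s t.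
Proof.
move=> /connectP [p pth ->].
elim: p s pth => [|y p IH] s /=; first by move=> *; exact: connect0.
move=> /andP [/and3P [esy sv1 yv1] pth] nc.
have sv2 : s != v2.
  by apply/eqP => E; rewrite E connect0 in nc.
have yv2 : y != v2.
  apply/eqP => E; move: nc; rewrite -E.
  by apply/negP/negPn; apply: connect1; rewrite /rel_minus /= esy sv1 yv1.
have nc' : ~~ connect (rel_minus e v1) y v2.
  apply: contra nc => c; apply: connect_trans c; apply: connect1.
  by rewrite /rel_minus /= esy sv1 yv1.
apply: connect_trans (IH y pth nc'); apply: connect1.
by rewrite /rel_minus /= esy sv2 yv2.
Qed.

Lemma isolated (r : rel V) s t : (forall y, ~~ r s y) -> connect r s t -> t = s.
Proof.
move=> H /connectP [[|y p] /= pth ->] //.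
by move/andP: pth => [h _]; rewrite (negbTE (H y)) in h.
Qed.

Definition sep3 v a b c :=
  [&& separated e leaf v a b, separated e leaf v a c & separated e leaf v b c].

Lemma sep_sym v a b : separated e leaf v a b = separated e leaf v b a.
Proof. by rewrite /separated csym. Qed.

Lemma sep_neq v a b : separated e leaf v a b -> a != b.
Proof. by apply: contraL => /eqP ->; rewrite /separated connect0. Qed.

Lemma sep3_perm v a b c : sep3 v a b c -> sep3 v a c b.
Proof. by case/and3P => h1 h2 h3; rewrite /sep3 h1 h2 sep_sym h3. Qed.

Hypothesis conn : forall u w : V, connect e u w.

Lemma median_unique v1 v2 a b c :
  interior leaf v1 -> interior leaf v2 -> sep3 v1 a b c -> sep3 v2 a b c ->
  v1 = v2.
Proof.
move=> i1 i2 /and3P [s1ab s1ac s1bc] /and3P [s2ab s2ac s2bc].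
apply/eqP/negPn/negP => v12.
pose C y := connect (rel_minus e v1) (leaf y) v2.
have claim : forall p q, separated e leaf v2 p q -> ~~ C p -> ~~ C q -> False.
  move=> p q spq Cp Cq.
  have lv : forall y, leaf y != v1.
    move=> y; apply/eqP => E; move: i1; rewrite /interior -E.
    by rewrite codom_f.
  have [wp cp ep] := last_step (lv p) (conn _ _).
  have [wq cq eq] := last_step (lv q) (conn _ _).
  have wp2 : wp != v2 by apply/eqP => E; move: Cp; rewrite /C -E cp.
  have wq2 : wq != v2 by apply/eqP => E; move: Cq; rewrite /C -E cq.
  have cp2 := avoid cp Cp.
  have cq2 := avoid cq Cq.
  move: spq; rewrite /separated => /negP; apply.
  apply: connect_trans cp2 _.
  apply: (@connect_trans _ _ v1).
    by apply: connect1; rewrite /rel_minus /= ep wp2 v12.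
  apply: (@connect_trans _ _ wq).
    by apply: connect1; rewrite /rel_minus /= esym eq v12 wq2.
  by rewrite csym.
have CC : forall p q, separated e leaf v1 p q -> C p -> C q -> False.
  move=> p q spq Cp Cq; move: spq; rewrite /separated => /negP; apply.
  by apply: connect_trans Cp _; rewrite csym.
case Ca: (C a).
  by apply: (claim b c) => //; apply/negP => H; [apply: (CC a b) | apply: (CC a c)].
case Cb: (C b).
  by apply: (claim a c) => //; [rewrite Ca | apply/negP => H; apply: (CC b c)].
by apply: (claim a b) => //; rewrite ?Ca ?Cb.
Qed.


Hypothesis inj : injective leaf.
Hypothesis deg1 : forall x, vdeg e (leaf x) = 1.
Hypothesis deg3 : forall v, v \notin codom leaf -> vdeg e v = 3.
Hypothesis cardX : 2 < #|X|.

Lemma nbr1 (u : V) : vdeg e u = 1 -> exists v, forall w, e u w = (w == v).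
Proof.
move=> /eqP /cards1P [v Ev]; exists v => w.
by rewrite -in_set1 -Ev inE.
Qed.

Lemma part2 (T : {set {set X}}) x :
  exists v, interior leaf v && [forall A in Sv e leaf T v, x \in A].
Proof.
have [v Nx] := nbr1 (deg1 x).
have ex : e (leaf x) v by rewrite Nx.
have iv : interior leaf v.
  rewrite /interior; apply/negP => /codomP [y Ey].
  have [v' Ny] := nbr1 (deg1 y).
  have Ny' : forall w, e (leaf y) w = (w == leaf x).
    move=> w; rewrite Ny; have: e (leaf y) (leaf x) by rewrite esym -Ey.
    by rewrite Ny => /eqP ->.
  pose S := [set leaf x; leaf y].
  have cl : forall u w, e u w -> u \in S -> w \in S.
    move=> u w euw /set2P [E|E]; move: euw; rewrite E.
      by rewrite Nx => /eqP ->; rewrite Ey set22.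
    by rewrite Ny' => /eqP ->; rewrite set21.
  have clS : closed e S.
    by move=> u w euw; apply/idP/idP; [exact: cl | apply: cl; rewrite esym].
  have [z Hz] : exists z, z \notin [set x; y].
    case: (boolP [exists z, z \notin [set x; y]]) => [/existsP//|/existsPn H].
    have : #|[set: X]| <= #|[set x; y]|.
      apply: subset_leq_card; apply/subsetP => z _; move: (H z); rewrite negbK //.
    rewrite cardsT cards2 => h; have := leq_trans cardX h; by case: (x != y).
  have : leaf z \in S by rewrite -(closed_connect clS (conn (leaf x) (leaf z))) set21.
  by move/set2P => [/inj E|/inj E]; move: Hz; rewrite E !inE eqxx ?orbT.
exists v; rewrite iv /=; apply/forall_inP => A.
rewrite inE => /existsP [a /existsP [b /existsP [c /andP [/eqP -> sup]]]].
move: sup => /andP [sab /andP [sac /andP [sbc _]]].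
have lv : forall y, leaf y != v.
  move=> y; apply/eqP => E; move: iv; rewrite /interior -E.
  by rewrite codom_f.
have [wa ca ea] := last_step (lv a) (conn _ _).
have [wb cb eb] := last_step (lv b) (conn _ _).
have [wc cc ec] := last_step (lv c) (conn _ _).
have nin : forall p q w, separated e leaf v p q ->
    connect (rel_minus e v) (leaf p) w -> connect (rel_minus e v) (leaf q) w -> False.
  move=> p q w spq cp cq; move: spq; rewrite /separated => /negP; apply.
  by apply: connect_trans cp _; rewrite csym.
have dab : wa != wb by apply/eqP => E; apply: (nin a b wa) => //; rewrite E.
have dac : wa != wc by apply/eqP => E; apply: (nin a c wa) => //; rewrite E.
have dbc : wb != wc by apply/eqP => E; apply: (nin b c wb) => //; rewrite E.
pose N := [set w | e v w].
have N3 : #|N| = 3 by apply: deg3.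
have Na : wa \in N by rewrite inE esym.
have Nb : wb \in N by rewrite inE esym.
have Nc : wc \in N by rewrite inE esym.
have Nl : leaf x \in N by rewrite inE esym.
have key : forall p w, connect (rel_minus e v) (leaf p) w -> w = leaf x -> p = x.
  move=> p w cp E; subst w; apply: inj; apply: (isolated (r := rel_minus e v)).
    by move=> y; rewrite /rel_minus /= Nx; apply/and3P => -[/eqP -> _]; rewrite eqxx.
  by move: cp; rewrite csym.
have N1 : #|N :\ wa :\ wb| = 1.
  have h1 := cardsD1 wa N; have h2 := cardsD1 wb (N :\ wa).
  have Hb : wb \in N :\ wa by apply/setD1P; split => //; rewrite eq_sym.
  by rewrite Na Hb N3 in h1 h2; move: h1; rewrite h2 => /eqP; rewrite !add1n eqSS eqSS => /eqP <-.
have [w0 E0] : exists w0, N :\ wa :\ wb = [set w0] by apply/cards1P; rewrite N1.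
have w0c : wc = w0.
  apply/set1P; rewrite -E0; apply/setD1P; split; first by rewrite eq_sym.
  by apply/setD1P; split; first by rewrite eq_sym.
have sub_abc : forall p w, connect (rel_minus e v) (leaf p) w -> p \in [set a; b; c] -> w = leaf x -> x \in [set a; b; c].
  by move=> p w cp Hp E; rewrite -(key p w cp E).
case: (eqVneq (leaf x) wa) => [Ea|Ea]; first by apply: (sub_abc a wa ca); rewrite ?inE ?eqxx.
case: (eqVneq (leaf x) wb) => [Eb|Eb]; first by apply: (sub_abc b wb cb); rewrite ?inE ?eqxx ?orbT.
have : leaf x \in [set w0] by rewrite -E0; apply/setD1P; split => //; apply/setD1P.
move/set1P; rewrite -w0c => Ec.
by apply: (sub_abc c wc cc); rewrite ?inE ?eqxx ?orbT.
Qed.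

Lemma key_edge (T : {set {set X}}) x v : support_edge e leaf T x v ->
  Sv e leaf T v != set0 -> exists p q,
  [&& p != q, p != x, q != x, [set x; p] \in T, [set x; q] \in T & sep3 v x p q].
Proof.
move=> /andP [iv /forall_inP H] /set0Pn [A HA].
have xA := H A HA.
move: HA; rewrite inE => /existsP [a /existsP [b /existsP [c /andP [/eqP EA sup]]]].
move: sup => /andP [sab /andP [sac /andP [sbc /andP [Tab /andP [Tac Tbc]]]]].
have dab := sep_neq sab; have dac := sep_neq sac; have dbc := sep_neq sbc.
move: xA; rewrite EA !inE => /orP [/orP [/eqP ->|/eqP ->]|/eqP ->].
- exists b, c; by rewrite dbc eq_sym dab eq_sym dac Tab Tac /sep3 sab sac sbc.
- exists a, c; rewrite dac dab eq_sym dbc setUC Tbc Tab /sep3 sbc.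
  by rewrite sep_sym sab sac.
- exists a, b; rewrite dab dac dbc setUC Tac setUC Tbc /sep3 sab.
  by rewrite sep_sym sac sep_sym sbc.
Qed.

End Aux.

Theorem lemma2 (X V : finType) (e : rel V) (leaf : X -> V)
    (T : {set {set X}}) (x : X) :
  2 < #|X| ->
  is_binary_phylo_tree e leaf ->
  pair_set T ->
  triplet_cover e leaf T ->
  multiplicity T x = 2 ->
  support_deg e leaf T x = 1.
Proof.
move=> cX [[esym irr conn acyc] [inj deg1 deg3]] _ cover mu.
have [v0 Hv0] := part2 esym conn inj deg1 deg3 cX T x.
rewrite /support_deg (_ : [set v | _] = [set v0]) ?cards1 //.
apply/setP => v; rewrite !inE; apply/idP/eqP => [Hv|->//].
have [p [q /andP [dpq /andP [dpx /andP [dqx /andP [Tp /andP [Tq s0]]]]]]] := key_edge esym Hv0 (cover v0 (andP Hv0).1).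
have [p' [q' /andP [dpq' /andP [dpx' /andP [dqx' /andP [Tp' /andP [Tq' s1]]]]]]] := key_edge esym Hv (cover v (andP Hv).1).
have uniq2 : forall y, y != x -> [set x; y] \in T -> y = p \/ y = q.
  pose P := [set s in T | x \in s].
  have sub : [set [set x; p]; [set x; q]] \subset P.
    by apply/subsetP => s /set2P [->|->]; rewrite inE ?Tp ?Tq set21.
  have ne : [set x; p] != [set x; q].
    apply/eqP => E; have : p \in [set x; q] by rewrite -E set22.
    by rewrite !inE (negbTE dpx) (negbTE dpq).
  have EP : [set [set x; p]; [set x; q]] == P.
    by rewrite eqEcard sub cards2 ne; move: mu; rewrite /multiplicity => ->.
  move=> y yx Ty; have : [set x; y] \in P by rewrite inE Ty set21.
  rewrite -(eqP EP) => /set2P [E|E]; [left|right].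
    have : y \in [set x; p] by rewrite -E set22.
    by rewrite !inE (negbTE yx) => /eqP.
  have : y \in [set x; q] by rewrite -E set22.
  by rewrite !inE (negbTE yx) => /eqP.
have i0 := (andP Hv0).1; have i1 := (andP Hv).1.
case: (uniq2 p' dpx' Tp') => Ep; case: (uniq2 q' dqx' Tq') => Eq;
  move: dpq' s1; rewrite Ep Eq ?eqxx // => _ s1.
  exact: (median_unique esym conn i1 i0 s1 s0).
exact: (median_unique esym conn i1 i0 (sep3_perm esym s1) s0).
Qed.
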